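(* Let $A\in\mathbb{R}^{n\times p}$ be an arbitrary matrix with $n<p$, and let $x^\circ\in\mathbb{R}^p$ be arbitrary. Then for each $q\in[0,2]$ there exists a non-zero vector $\tilde x\in\mathbb{R}^p$ with $A\tilde x=Ax^\circ$ and $$s_q(\tilde x)\ge\frac1{\pi e}\Big(1-\frac np\Big)^2 p.$$ Also, for $q\in(2,\infty]$ there exists a non-zero vector $\bar x\in\mathbb{R}^p$ with $A\bar x=Ax^\circ$ and $$s_q(\bar x)\ge\frac{\sqrt{\frac2{\pi e}}\,(p-n)}{1+\sqrt{16\log(2p)}}.$$
   Context: For $x\in\mathbb{R}^p\setminus\{0\}$ let $\pi_j(x):=|x_j|/\|x\|_1$. For $q\notin\{0,1,\infty\}$, $s_q(x):=(\|x\|_q/\|x\|_1)^{q/(1-q)}$; $s_0(x):=\|x\|_0$ (number of nonzero entries), $s_1(x):=\exp\big(-\sum_j\pi_j(x)\log\pi_j(x)\big)$, $s_\infty(x):=\|x\|_1/\|x\|_\infty$. *)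

(* Defs.v *)
From HB Require Import structures.
From mathcomp Require Import all_boot all_order all_algebra.
From mathcomp Require Import all_classical all_reals all_analysis.
Set Implicit Arguments. Unset Strict Implicit. Unset Printing Implicit Defensive.
Import Order.TTheory GRing.Theory Num.Theory.
Local Open Scope ring_scope.

Section Sparsity.
Variables (R : realType) (p : nat).
Implicit Types x : 'cV[R]_p.

Definition l0norm x : R := #|[set i : 'I_p | x i 0 != 0]|%:R.
Definition l1norm x : R := \sum_(i < p) `|x i 0|.
Definition linfnorm x : R := \big[Num.max/0]_(i < p) `|x i 0|.
Definition lqnorm (q : R) x : R := powR (\sum_(i < p) powR `|x i 0| q) q^-1.
Definition pij x (i : 'I_p) : R := `|x i 0| / l1norm x.
Definition entropy x : R :=
  - \sum_(i < p) (if pij x i == 0 then 0 else pij x i * ln (pij x i)).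

(* the numerical sparsity s_q(x), q in [0, +oo] encoded as an extended real *)
Definition s_q (q : \bar R) x : R :=
  match q with
  | +oo%E => l1norm x / linfnorm x
  | -oo%E => 0 (* not used *)
  | (r%:E)%E =>
      if r == 0 then l0norm x
      else if r == 1 then expR (entropy x)
      else powR (lqnorm r x / l1norm x) (r / (1 - r))
  end.
End Sparsity.

(* Main.v *)
Require Import Defs.
From HB Require Import structures.
From mathcomp Require Import all_boot all_order all_algebra.
From mathcomp Require Import all_classical all_reals all_analysis.
From mathcomp Require Import ring lra zify.
Import Order.TTheory GRing.Theory Num.Theory.
Local Open Scope ring_scope.

Section S.
Variables (R : realType) (p : nat) (x : 'cV[R]_p) (M : R).
Hypotheses (hM : 0 < M) (hxM : forall i, `|x i 0| <= M) (hP : 0 < l1norm x).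
Let P := l1norm x.

Let Sr (r : R) := \sum_(i < p) powR `|x i 0| r.

Lemma Sr_gt0 r : 0 < Sr r.
Proof.
have [i hi] : exists i, x i 0 != 0.
  apply/existsP; apply: contraTT hP; rewrite negb_exists => /forallP h.
  rewrite /l1norm big1 ?ltxx // => i _; move: (h i); rewrite negbK => /eqP ->.
  by rewrite normr0.
rewrite /Sr (bigD1 i) //= ltr_pwDl ?powR_gt0 ?normr_gt0 //.
by apply: sumr_ge0 => j _; apply: powR_ge0.
Qed.

Lemma keyS (r : R) : r != 0 ->
  (1 < r -> ln (Sr r) <= ln P + (r - 1) * ln M) /\
  (r < 1 -> ln P + (r - 1) * ln M <= ln (Sr r)).
Proof.
move=> r0.
have hE : ln P + (r - 1) * ln M = ln (\sum_i `|x i 0| * expR ((r - 1) * ln M)).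
  by rewrite -mulr_suml lnM ?posrE ?expR_gt0 // expRK.
have hQ : 0 < \sum_i `|x i 0| * expR ((r - 1) * ln M).
  by rewrite -mulr_suml mulr_gt0 ?expR_gt0.
have pw : forall i, 0 < `|x i 0| -> powR `|x i 0| r = expR (r * ln `|x i 0|).
  by move=> i hi; rewrite /powR gt_eqF.
have rw : forall i, 0 < `|x i 0| -> `|x i 0| * expR ((r - 1) * ln M) =
   expR (ln `|x i 0| + (r - 1) * ln M).
  by move=> i hi; rewrite expRD lnK.
have lnle : forall i, 0 < `|x i 0| -> ln `|x i 0| <= ln M.
  by move=> i hi; rewrite ler_ln ?posrE.
rewrite hE; split => hr.
- rewrite ler_ln ?posrE ?Sr_gt0 //; apply: ler_sum => i _.
  have [hi|] := boolP (0 < `|x i 0|); last first.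
    rewrite normr_gt0 negbK => /eqP ->; rewrite normr0 mul0r powR0 //.
  rewrite pw // rw // ler_expR.
  have hab := lnle i hi.
  have : 0 <= (r - 1) * (ln M - ln `|x i 0|) by apply: mulr_ge0; rewrite subr_ge0 // ltW.
  nra.
- rewrite ler_ln ?posrE ?Sr_gt0 //; apply: ler_sum => i _.
  have [hi|] := boolP (0 < `|x i 0|); last first.
    rewrite normr_gt0 negbK => /eqP ->; rewrite normr0 mul0r powR0 //.
  rewrite pw // rw // ler_expR.
  have hab := lnle i hi.
  have : 0 <= (1 - r) * (ln M - ln `|x i 0|) by apply: mulr_ge0; rewrite subr_ge0 // ltW.
  nra.
Qed.

Lemma sr_ge (r : R) : 0 < r -> r != 1 ->
  P / M <= powR (lqnorm r x / P) (r / (1 - r)).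
Proof.
move=> r0 r1.
have hPM : 0 < P / M by rewrite divr_gt0.
have hlq : 0 < lqnorm r x by rewrite /lqnorm powR_gt0 // Sr_gt0.
rewrite /powR gt_eqF ?divr_gt0 //.
rewrite -[P / M]lnK ?posrE // ler_expR ln_div ?posrE // ln_div ?posrE //.
rewrite /lqnorm ln_powR -/(Sr r).
have := @keyS r (lt0r_neq0 r0).
move: (ln (Sr r)) (ln P) (ln M) => s a b [k1 k2].
have r0' : r != 0 by rewrite gt_eqF.
have e : r / (1 - r) * (r^-1 * s - a) - (a - b) = (s - a - (r - 1) * b) / (1 - r).
  by field; rewrite r0' andbT subr_eq0 eq_sym.
rewrite -subr_ge0 e.
have [hr|hr|hr] := ltgtP r 1.
- by rewrite divr_ge0 // ?subr_ge0 //; move: (k2 hr); lra.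
- rewrite -mulrNN -invrN divr_ge0 //; [move: (k1 hr); lra | lra].
- by move: r1; rewrite hr eqxx.
Qed.
Lemma s0_ge : P / M <= l0norm x.
Proof.
rewrite ler_pdivrMr // /P /l1norm /l0norm cardsE.
rewrite (bigID (fun i => x i 0 != 0)) /=.
rewrite [X in _ + X]big1 ?addr0; last by move=> i; rewrite negbK => /eqP ->; rewrite normr0.
apply: le_trans (ler_sum _ (fun i _ => hxM i)) _.
by rewrite sumr_const mulr_natl.
Qed.

Lemma pij_sum : \sum_i pij x i = 1.
Proof. by rewrite /pij -mulr_suml -/(l1norm x) divff // gt_eqF. Qed.

Lemma s1_ge : P / M <= expR (entropy x).
Proof.
have hPM : 0 < P / M by rewrite divr_gt0.
rewrite -[P / M]lnK ?posrE // ler_expR ln_div ?posrE //.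
rewrite /entropy lerNr opprB.
have -> : ln M - ln P = \sum_i pij x i * (ln M - ln P).
  by rewrite -mulr_suml pij_sum mul1r.
apply: ler_sum => i _.
case: ifP => [/eqP ->|hz]; first by rewrite mul0r.
have hpi : 0 < pij x i.
  rewrite lt_neqAle eq_sym hz /pij divr_ge0 //. exact: ltW.
apply: ler_wpM2l; first exact: ltW.
have hxi : 0 < `|x i 0|.
  by move: hpi; rewrite /pij pmulr_lgt0 ?invr_gt0.
rewrite /pij ln_div ?posrE //.
rewrite lerD2r ler_ln ?posrE //.
Qed.
Lemma sq_ge (q : \bar R) : linfnorm x = M -> (0 <= q)%E -> P / M <= s_q q x.
Proof.
move=> hL; case: q => [r| |] //= hq; last by rewrite hL.
rewrite lee_fin in hq.
have [r0|r0] := boolP (r == 0); first exact: s0_ge.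
have [r1|r1] := boolP (r == 1); first exact: s1_ge.
apply: sr_ge => //.
by rewrite lt_neqAle eq_sym r0.
Qed.
End S.
Lemma ker_exists (R : realType) n p (A : 'M[R]_(n, p)) (S : {set 'I_p}) :
  (n + #|S| < p)%N ->
  exists w : 'cV[R]_p, w != 0 /\ A *m w = 0 /\ forall i, i \in S -> w i 0 = 0.
Proof.
move=> h.
pose D := \matrix_(j < #|S|, i < p) ((i == enum_val j)%:R : R).
pose Mx := col_mx A D.
have hr : (\rank Mx < p)%N := leq_ltn_trans (rank_leq_row Mx) h.
have hK : kermx Mx^T != 0.
  by rewrite -mxrank_eq0 mxrank_ker mxrank_tr subn_eq0 -ltnNge.
have [i hi] : exists i, row i (kermx Mx^T) != 0.
  apply/existsP; apply: contraNT hK; rewrite negb_exists => /forallP hh.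
  apply/eqP/row_matrixP => i; rewrite row0; exact/eqP/(negPn (hh i)).
exists (row i (kermx Mx^T))^T.
have hM : Mx *m (row i (kermx Mx^T))^T = 0.
  apply: trmx_inj; rewrite trmx_mul !trmxK -row_mul mulmx_ker row0 trmx0.
  done.
move: hM; rewrite mul_col_mx => /eqP; rewrite col_mx_eq0 => /andP [/eqP hA /eqP hD].
split; first by rewrite trmx_eq0.
split => // k hk.
pose j : 'I_#|S| := enum_rank_in hk k.
have hj : enum_val j = k by exact: enum_rankK_in.
have := congr1 (fun m : 'cV[R]_#|S| => m j 0) hD.
rewrite [LHS]mxE (bigD1 k) //= [D j k]mxE hj eqxx mul1r big1 ?addr0 //.
  by move=> ->; rewrite !mxE.
by move=> l hl; rewrite [D j l]mxE hj (negbTE hl) mul0r.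
Qed.

Lemma sg_le (R : realType) (a b : R) : a * Num.sg b <= `|a|.
Proof.
apply: le_trans (ler_norm _) _; rewrite normrM normr_sg.
by case: (b != 0); rewrite ?mulr1 ?mulr0.
Qed.

Definition actS {R : realType} {p : nat} (x : 'cV[R]_p) (T : R) := [set i | `|x i 0| == T].

Arguments sg_le {R}.

Lemma step (R : realType) n p (A : 'M[R]_(n, p)) (x0 x : 'cV[R]_p) (T : R) :
  0 <= T ->
  A *m x = A *m x0 -> (forall i, `|x i 0| <= T) ->
  (n + #|actS x T| < p)%N ->
  exists x' : 'cV[R]_p, A *m x' = A *m x0 /\ (forall i, `|x' i 0| <= T) /\
    (#|actS x T| < #|actS x' T|)%N.
Proof.
move=> T0 hA hT hc.
have [w [w0 [Aw wS]]] := @ker_exists R n p A _ hc.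
have [i0 hi0] : exists i, w i 0 != 0.
  apply/existsP; apply: contraNT w0; rewrite negb_exists => /forallP hh.
  by apply/eqP/matrixP => i j; rewrite ord1 mxE; apply/eqP/(negPn (hh i)).
pose s i := (T - x i 0 * Num.sg (w i 0)) / `|w i 0|.
case: (@arg_minP _ R _ i0 (fun i => w i 0 != 0) s hi0) => j hj hmin.
pose t := s j.
have t0 : 0 <= t.
  rewrite /t /s divr_ge0 // subr_ge0; apply: le_trans (sg_le _ _) (hT j).
pose x' := x + t *: w.
have x'E : forall i, x' i 0 = x i 0 + t * w i 0 by move=> i; rewrite !mxE.
have key : forall i, w i 0 != 0 ->
   x' i 0 = Num.sg (w i 0) * (x i 0 * Num.sg (w i 0) + t * `|w i 0|).
  move=> i hi; rewrite x'E normrEsg.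
  have g2 : Num.sg (w i 0) * Num.sg (w i 0) = 1 by rewrite -expr2 sqr_sg hi.
  set g := Num.sg (w i 0) in g2 *.
  apply/eqP; rewrite -subr_eq0.
  have -> : x i 0 + t * w i 0 - g * (x i 0 * g + t * (g * w i 0)) =
     (1 - g * g) * (x i 0 + t * w i 0) by ring.
  by rewrite g2 subrr mul0r.
have nk : forall i, w i 0 != 0 -> forall y, `|Num.sg (w i 0) * y| = `|y|.
  by move=> i hi y; rewrite normrM normr_sg hi mul1r.
exists x'; split; first by rewrite mulmxDr -scalemxAr Aw scaler0 addr0.
split.
- move=> i; have [hi|hi] := boolP (w i 0 != 0); last first.
    by rewrite x'E (eqP (negPn hi)) mulr0 addr0.
  rewrite key // nk // ler_norml.
  have hwi : 0 < `|w i 0| by rewrite normr_gt0.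
  have h1 := sg_le (x i 0) (w i 0).
  have h2 : - `|x i 0| <= x i 0 * Num.sg (w i 0).
    by rewrite lerNl -mulrN -sgrN; exact: sg_le.
  have h3 := hT i.
  have h4 : t * `|w i 0| <= T - x i 0 * Num.sg (w i 0).
    by rewrite -ler_pdivlMr //; apply: hmin.
  have h5 : 0 <= t * `|w i 0| by rewrite mulr_ge0 // ltW.
  apply/andP; split; lra.
- apply: proper_card; apply/properP; split.
    apply/fintype.subsetP => i; rewrite !inE => hi.
    by rewrite x'E wS ?inE // mulr0 addr0.
  exists j.
    rewrite inE key // nk //.
    have hwj : 0 < `|w j 0| by rewrite normr_gt0.
    by rewrite /t /s (divfK (lt0r_neq0 hwj)) addrC subrK ger0_norm.
  by rewrite inE; apply: contra hj => hj'; apply/eqP; apply: wS; rewrite inE.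
Qed.

Lemma build (R : realType) n p (A : 'M[R]_(n, p)) (x0 : 'cV[R]_p) (T : R) :
  0 <= T -> (forall i, `|x0 i 0| <= T) ->
  exists x : 'cV[R]_p, A *m x = A *m x0 /\ (forall i, `|x i 0| <= T) /\
    (p - n <= #|actS x T|)%N.
Proof.
move=> T0 h0.
suff H : forall k, (k <= p - n)%N -> exists x : 'cV[R]_p, A *m x = A *m x0 /\
    (forall i, `|x i 0| <= T) /\ (k <= #|actS x T|)%N by exact: H.
elim=> [_|k IH hk]; first by exists x0.
have [x [hA [hT hc]]] := IH (ltnW hk).
case: (ltnP k #|actS x T|) => h; first by exists x.
have hc' : (n + #|actS x T| < p)%N by lia.
have [x' [hA' [hT' hc'']]] := @step R n p A x0 x T T0 hA hT hc'.
by exists x'; split => //; split => //; lia.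
Qed.

Theorem lemma3 (R : realType) (n p : nat) (A : 'M[R]_(n, p)) (x0 : 'cV[R]_p) :
  (n < p)%N ->
  (forall q : \bar R, (0 <= q)%E -> (q <= 2%:E)%E ->
     exists xt : 'cV[R]_p, xt != 0 /\ A *m xt = A *m x0 /\
       (pi * expR 1)^-1 * (1 - n%:R / p%:R) ^+ 2 * p%:R <= s_q q xt) /\
  (forall q : \bar R, (2%:E < q)%E ->
     exists xb : 'cV[R]_p, xb != 0 /\ A *m xb = A *m x0 /\
       Num.sqrt (2 / (pi * expR 1)) * (p%:R - n%:R)
         / (1 + Num.sqrt (16 * ln (2 * p%:R))) <= s_q q xb).
Proof.
move=> hnp.
pose T : R := 1 + \sum_i `|x0 i 0|.
have hs : 0 <= \sum_i `|x0 i 0| by apply: sumr_ge0.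
have T0 : 0 < T by rewrite /T; lra.
have h0 : forall i, `|x0 i 0| <= T.
  move=> i; rewrite /T (bigD1 i) //=.
  have : 0 <= \sum_(j | j != i) `|x0 j 0| by apply: sumr_ge0.
  lra.
have [x [hA [hT hc]]] := @build R n p A x0 T (ltW T0) h0.
have [j hj] : exists j, j \in actS x T.
  by apply/set0Pn; rewrite -card_gt0; apply: leq_trans hc; rewrite subn_gt0.
have hjT : `|x j 0| = T by move: hj; rewrite inE => /eqP.
have hL : linfnorm x = T.
  apply/eqP; rewrite eq_le; apply/andP; split.
    rewrite /linfnorm; apply: (big_ind (fun y => y <= T)) => //; first exact: ltW.
    by move=> a b ha hb; rewrite ge_max ha hb.
  by rewrite /linfnorm (bigD1 j) //= -hjT le_max lexx.
have hcard : #|actS x T|%:R * T <= l1norm x.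
  rewrite /l1norm (bigID (fun i => i \in actS x T)) /=.
  have : 0 <= \sum_(i | i \notin actS x T) `|x i 0| by apply: sumr_ge0.
  have -> : \sum_(i | i \in actS x T) `|x i 0| = #|actS x T|%:R * T.
    rewrite (eq_bigr (fun=> T)); first by rewrite sumr_const mulr_natl.
    by move=> i; rewrite inE => /eqP.
  lra.
have hpn : (p - n)%:R <= #|actS x T|%:R :> R by rewrite ler_nat.
have hpn1 : (1 <= p - n)%N by rewrite subn_gt0.
have hpn1' : 1 <= (p - n)%:R :> R by rewrite ler1n.
have hP : 0 < l1norm x.
  apply: lt_le_trans hcard; apply: mulr_gt0 => //; lra.
have hxn : x != 0.
  apply/eqP => hx; move: hjT; rewrite hx mxE normr0 => hT0; lra.
have key : forall q : \bar R, (0 <= q)%E -> p%:R - n%:R <= s_q q x.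
  move=> q hq; have hs' := @sq_ge R p x T T0 hT hP q hL hq.
  apply: le_trans hs'.
  have e : (p%:R - n%:R : R) = (p - n)%:R by rewrite natrB // ltnW.
  rewrite e ler_pdivlMr //.
  exact: le_trans (ler_wpM2r (ltW T0) hpn) hcard.
have ha : 0 < p%:R :> R by rewrite ltr0n; lia.
have hab : n%:R < p%:R :> R by rewrite ltr_nat.
have hb : 0 <= n%:R :> R by [].
have hpe : 2 <= pi * expR 1 :> R.
  have h1 := @pi_ge2 R; have h2 := @expR_ge1Dx R 1.
  nra.
have hc0 : 0 < pi * expR 1 :> R by lra.
split.
- move=> q hq _; exists x; split => //; split => //.
  apply: le_trans (key q hq).
  set u := 1 - n%:R / p%:R.
  have eu : u * p%:R = p%:R - n%:R by rewrite /u mulrBl mul1r divfK // gt_eqF.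
  have hu0 : 0 <= u by rewrite /u subr_ge0 ler_pdivrMr // mul1r ltW.
  have hu1 : u <= 1 by rewrite /u lerBlDr lerDl divr_ge0 // ltW.
  have hci : (pi * expR 1 : R)^-1 <= 1 by rewrite invf_le1 //; lra.
  have hci0 : 0 <= (pi * expR 1 : R)^-1 by rewrite invr_ge0 ltW.
  rewrite -eu; apply: ler_wpM2r; first exact: ltW.
  have hu2 : u ^+ 2 <= u by rewrite expr2 ler_piMl.
  apply: le_trans hu2; rewrite ler_piMl // exprn_ge0 //.
- move=> q hq; exists x; split => //; split => //.
  have hq0 : (0 <= q)%E by apply: le_trans (ltW hq); rewrite lee_fin.
  apply: le_trans (key q hq0).
  set s := Num.sqrt _; set d := 1 + _.
  have hs0 : 0 <= s by apply: sqrtr_ge0.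
  have hs1 : s <= 1.
    have h21 : 2 / (pi * expR 1) <= 1 :> R by rewrite ler_pdivrMr // mul1r.
    by move/ler_wsqrtr: h21; rewrite sqrtr1.
  have hd : 1 <= d by rewrite /d lerDl sqrtr_ge0.
  rewrite ler_pdivrMr; last lra.
  have : 0 <= (p%:R - n%:R) * (d - s) by apply: mulr_ge0; lra.
  nra.
Qed.
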